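(* Let $(a_i)_{i\in\mathbb Z},(b_i)_{i\in\mathbb Z}$ be finitely supported sequences of integers and put $q_i=a_i-b_i$. The following three sets of conditions are equivalent. (1) With $q_\sigma$ the lowest nonzero $q_i$: (a) $a_l=0$ for $l<\sigma$; (b) $a_\sigma=q_\sigma>0$; (c) $\max(q_l,0)\le a_l<\sum_{i\le l}q_i$ for $l>\sigma$. (2) With $a_\sigma$ the lowest nonzero $a_i$: (a) all $a_i,b_i$ are nonnegative; (b) $b_i=0$ for $i\le\sigma$; (c) $\sum_{i\le l}b_i<\sum_{i<l}a_i$ for all $l>\sigma$. (3) With $m=\sum_ia_i$, $n=\sum_ib_i$: (a) all $a_i,b_i$ are nonnegative; (b) $n<m$; (c) for all $(\alpha,\beta)\in R_{m,n}$ with $\beta\ge\alpha-1$ one has $(\alpha,\beta)\in L_{a,b}$.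
   Context: For positive integers $m,n$, $R_{m,n}=\{(\alpha,\beta)\in\mathbb Z^2\mid1\le\alpha\le m,\ 1\le\beta\le n\}$. For a finitely supported sequence $(c_i)$ of nonnegative integers, $S(c)$ is the nondecreasing finite sequence of integers in which each integer $i$ appears exactly $c_i$ times, indexed starting from $1$ (so $S(c)$ has length $\sum_ic_i$). For nonnegative finitely supported $(a_i),(b_i)$ with $m=\sum_ia_i$, $n=\sum_ib_i$, put $L_{a,b}=\{(\alpha,\beta)\in R_{m,n}\mid S(a)_\alpha<S(b)_\beta\}$. *)

(* Defs.v *)
(* Finitely supported integer sequences indexed by Z are
   represented as functions int -> int together with an explicit bound N
   such that the support lies in [-N, N]; all sums over Z are taken over
   this window (terms outside are zero, so the value does not depend on N). *)
From mathcomp Require Import all_boot all_order all_algebra.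
Set Implicit Arguments. Unset Strict Implicit. Unset Printing Implicit Defensive.
Import Order.TTheory GRing.Theory Num.Theory.
Local Open Scope ring_scope.

Definition window (N : nat) : seq int :=
  [seq (k%:Z - N%:Z) | k <- iota 0 (N.*2.+1)].

Definition psum_le (N : nat) (c : int -> int) (l : int) : int :=
  \sum_(i <- window N | i <= l) c i.
Definition psum_lt (N : nat) (c : int -> int) (l : int) : int :=
  \sum_(i <- window N | i < l) c i.
Definition tsum (N : nat) (c : int -> int) : int :=
  \sum_(i <- window N) c i.

(* S(c): nondecreasing sequence where each i appears c_i times
   (c is assumed nonnegative where used; `|c i| is used to get a nat). *)
Definition Sseq (N : nat) (c : int -> int) : seq int :=
  flatten [seq nseq `|c i|%N i | i <- window N].

(* S(c)_alpha, indexed from 1 *)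
Definition Sat (N : nat) (c : int -> int) (alpha : nat) : int :=
  nth 0 (Sseq N c) alpha.-1.

Definition inR (m n : int) (alpha beta : nat) : Prop :=
  [/\ (1 <= alpha)%N, alpha%:Z <= m, (1 <= beta)%N & beta%:Z <= n].

Definition inL (N : nat) (a b : int -> int) (alpha beta : nat) : Prop :=
  inR (tsum N a) (tsum N b) alpha beta /\ Sat N a alpha < Sat N b beta.

(* Main.v *)
Require Import Defs.
From mathcomp Require Import all_boot all_order all_algebra zify.
Import Order.TTheory GRing.Theory Num.Theory.
Local Open Scope ring_scope.
Set Implicit Arguments. Unset Strict Implicit.

Lemma mem_window N i : (i \in window N) = (- N%:Z <= i <= N%:Z).
Proof.
apply/idP/idP.
- case/mapP=> k; rewrite mem_iota => /andP[_ hk] ->; apply/andP; split; lia.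
- move=> /andP[h1 h2]; apply/mapP; exists (absz (i + N%:Z)).
    rewrite mem_iota; apply/andP; split; lia.
  lia.
Qed.

Lemma window_uniq N : uniq (window N).
Proof. rewrite map_inj_uniq ?iota_uniq // => x y /= h; lia. Qed.

Lemma sum_pred1 (r : seq int) (c : int -> int) l :
  \sum_(i <- r | i == l) c i = c l *+ count_mem l r.
Proof.
elim: r => [|x r IH]; first by rewrite big_nil.
rewrite big_cons IH /=; case: eqP => [->|_]; last by rewrite add0n.
by rewrite mulrS.
Qed.

Lemma split_le (r : seq int) (c : int -> int) l :
  \sum_(i <- r | i <= l) c i =
  \sum_(i <- r | i < l) c i + \sum_(i <- r | i == l) c i.
Proof.
elim: r => [|x r IH]; first by rewrite !big_nil addr0.
rewrite !big_cons; case: ltgtP => _; rewrite IH.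
- by rewrite addrA.
- by [].
- by rewrite addrCA.
Qed.

Lemma mem_S (r : seq int) (f : int -> nat) y :
  y \in flatten [seq nseq (f i) i | i <- r] -> y \in r.
Proof.
elim: r => [|x r IH] //=; rewrite mem_cat => /orP[|/IH]; last by rewrite inE orbC => ->.
by rewrite mem_nseq inE => /andP[_ ->].
Qed.

Lemma nth_S (r : seq int) (f : int -> nat) k l :
  sorted <=%R r ->
  (k < size (flatten [seq nseq (f i) i | i <- r]))%N ->
  (nth (0:int) (flatten [seq nseq (f i) i | i <- r]) k < l) =
  (k < count (fun x : int => (x < l)%R) (flatten [seq nseq (f i) i | i <- r]))%N.
Proof.
elim: r k => [|x r IH] k //= hs.
have hall : forall y, y \in flatten [seq nseq (f i) i | i <- r] -> x <= y.
  move=> y /mem_S hy; have := order_path_min le_trans hs.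
  by move/allP/(_ _ hy).
have hs' : sorted <=%R r by move: hs; case: r {IH hall} => //= y r /andP[].
set S := flatten [seq nseq (f i) i | i <- r].
have hc0 : l <= x -> count (fun y : int => (y < l)%R) S = 0%N.
  move=> hxl; rewrite (eq_in_count (a2 := pred0)) ?count_pred0 // => y /hall hy /=.
  by apply/negbTE; rewrite -leNgt; exact: le_trans hxl hy.
rewrite size_cat size_nseq count_cat count_nseq nth_cat size_nseq => hk.
case: (ltnP k (f x)) => hkx.
  rewrite nth_nseq hkx.
  case: (ltP x l) => hxl; first by rewrite mul1n ltn_addr.
  by rewrite mul0n add0n hc0.
have hk' : (k - f x < size S)%N by lia.
case: (ltP x l) => hxl.
  rewrite mul1n IH // -/S; apply/idP/idP; lia.
rewrite mul0n add0n hc0 //; apply/negbTE; rewrite -leNgt.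
apply: le_trans hxl (hall _ (mem_nth _ hk')).
Qed.
Lemma count_S (r : seq int) (c : int -> int) (P : pred int) :
  (forall i, 0 <= c i) ->
  (count P (flatten [seq nseq `|c i|%N i | i <- r]))%:Z = \sum_(i <- r | P i) c i.
Proof.
move=> h; elim: r => [|x r IH]; first by rewrite big_nil.
rewrite /= count_cat count_nseq big_cons PoszD IH; case: (P x) => /=.
  by rewrite mul1n gez0_abs.
by rewrite mul0n add0r.
Qed.
Section S.
Variables (N : nat) (c : int -> int).
Hypothesis Hs : forall i : int, N%:Z < `|i| -> c i = 0.

Lemma psum_le_lt l : psum_le N c l = psum_lt N c l + c l.
Proof.
have -> : psum_le N c l = psum_lt N c l + \sum_(i <- window N | i == l) c i.
  exact: split_le.
rewrite sum_pred1; case: (boolP (l \in window N)) => hl.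
  by rewrite count_uniq_mem ?window_uniq // hl.
have -> : count_mem l (window N) = 0%N by apply/count_memPn.
rewrite Hs //; move: hl; rewrite mem_window; lia.
Qed.

Lemma psum_le_S l : psum_le N c l = psum_lt N c (l + 1).
Proof. by apply: eq_bigl => i; rewrite ltzD1. Qed.

Lemma psum_lt_big l : N%:Z < l -> psum_lt N c l = tsum N c.
Proof.
move=> hl; rewrite /psum_lt /tsum big_mkcond /=; apply: eq_big_seq => i.
rewrite mem_window => hi; case: ifP => // /negbT; lia.
Qed.

Lemma psum_le_big l : N%:Z <= l -> psum_le N c l = tsum N c.
Proof. by move=> hl; rewrite psum_le_S psum_lt_big //; lia. Qed.

Lemma psum_lt0 l : (forall i, i < l -> c i = 0) -> psum_lt N c l = 0.
Proof. by move=> h; apply: big1. Qed.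

Hypothesis Hpos : forall i, 0 <= c i.

Lemma psum_le_ge0 l : 0 <= psum_le N c l.
Proof. by apply: sumr_ge0. Qed.
Lemma psum_lt_ge0 l : 0 <= psum_lt N c l.
Proof. by apply: sumr_ge0. Qed.

Lemma psum_le_mono l1 l2 : l1 <= l2 -> psum_le N c l1 <= psum_le N c l2.
Proof.
move=> h; rewrite /psum_le !(big_mkcond (fun i => _ <= _)) ler_sum // => i _.
case: ifP => h1; last by case: ifP.
by have -> : i <= l2 by apply: le_trans h1 h.
Qed.

Lemma term_le l i : i <= l -> c i <= psum_le N c l.
Proof.
move=> h; have h1 := psum_le_mono h; have h2 := psum_lt_ge0 i.
have h3 := psum_le_lt i; lia.
Qed.
End S.

Lemma window_sorted N : sorted <=%R (window N).
Proof.
rewrite sorted_map; apply: (sub_sorted _ (iota_sorted 0 _)) => x y /= h; lia.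
Qed.

Lemma size_S N c : (forall i, 0 <= c i) -> (size (Sseq N c))%:Z = tsum N c.
Proof. by move=> h; rewrite -count_predT count_S. Qed.

Lemma keyS N c k l : (forall i, 0 <= c i) -> k%:Z < tsum N c ->
  (nth 0 (Sseq N c) k < l) = (k%:Z < psum_lt N c l).
Proof.
move=> h hk; rewrite /Sseq nth_S ?window_sorted //.
  by rewrite /psum_lt -(@count_S (window N) c (fun x : int => (x < l)%R) h) ltz_nat.
by move: hk; rewrite -(@size_S N c h) ltz_nat.
Qed.

Theorem lemma5p1p1 (a b : int -> int) (N : nat)
  (Hsupp : forall i : int, N%:Z < `|i| -> a i = 0 /\ b i = 0) :
  let q := fun i => a i - b i in
  let cond1 :=
    exists sigma : int,
      [/\ q sigma != 0, (forall l, l < sigma -> q l = 0),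
          (forall l, l < sigma -> a l = 0),
          a sigma = q sigma /\ 0 < q sigma &
          (forall l, sigma < l ->
             Num.max (q l) 0 <= a l /\ a l < psum_le N q l)] in
  let cond2 :=
    exists sigma : int,
      [/\ a sigma != 0, (forall l, l < sigma -> a l = 0),
          (forall i, 0 <= a i /\ 0 <= b i),
          (forall i, i <= sigma -> b i = 0) &
          (forall l, sigma < l -> psum_le N b l < psum_lt N a l)] in
  let cond3 :=
    [/\ (forall i, 0 <= a i /\ 0 <= b i),
        tsum N b < tsum N a &
        (forall alpha beta : nat,
           inR (tsum N a) (tsum N b) alpha beta ->
           alpha%:Z - 1 <= beta%:Z ->
           inL N a b alpha beta)] in
  (cond1 <-> cond2) /\ (cond2 <-> cond3).
Proof.
move=> q c1 c2 c3; subst q c1 c2 c3.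
have Ha : forall i, N%:Z < `|i| -> a i = 0 by move=> i /Hsupp[].
have Hb : forall i, N%:Z < `|i| -> b i = 0 by move=> i /Hsupp[].
have HQ : forall l, psum_le N (fun i => a i - b i) l =
   psum_lt N a l + a l - psum_le N b l.
  by move=> l; rewrite -psum_le_lt // /psum_le sumrB.
split; split.
- case=> sigma [hq hql hal [haq hqpos] hc]; exists sigma; split => //.
  + lia.
  + move=> i; case: (ltgtP i sigma) => hi.
    * have := hql i hi; have := hal i hi; lia.
    * have := hc i hi; rewrite ge_max; case=> /andP[h1 h2] _; lia.
    * subst i; lia.
  + move=> i; rewrite le_eqVlt => /orP[/eqP ->|hi]; first lia.
    have := hql i hi; have := hal i hi; lia.
  + move=> l hl; have := hc l hl; rewrite HQ; lia.
- case=> sigma [ha0 hal hpos hb hc]; exists sigma; split => //.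
  + have := hb sigma (lexx _); lia.
  + move=> l hl; have := hb l (ltW hl); have := hal l hl; lia.
  + have := hb sigma (lexx _); have := hpos sigma; lia.
  + move=> l hl; have := hc l hl; have := hpos l; rewrite HQ ge_max; lia.
- case=> sigma [ha0 hal hpos hb hc].
  have hpa : forall i, 0 <= a i by move=> i; case: (hpos i).
  have hpb : forall i, 0 <= b i by move=> i; case: (hpos i).
  have hsig : sigma <= N%:Z.
    case: (lerP sigma N%:Z) => // hs; have := Ha sigma; move: ha0; lia.
  have hB0 : psum_le N b sigma = 0 by apply: big1 => i hi; exact: hb.
  split => //.
  + have := hc (N%:Z + 1); rewrite (psum_le_big b) ?(psum_lt_big a); lia.
  + move=> alpha beta hR hab; split => //.
    case: hR => h1 h2 h3 h4; rewrite /Sat.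
    set L := nth 0 (Sseq N b) beta.-1.
    have hj : beta.-1%:Z < psum_le N b L.
      rewrite (psum_le_S N b) -keyS //; [rewrite /L; lia | lia].
    have hL : sigma < L.
      case: (ltP sigma L) => // hL; have := psum_le_mono N hpb hL; lia.
    have := hc L hL; rewrite keyS //; lia.
- case=> hpos hnm h3.
  have hpa : forall i, 0 <= a i by move=> i; case: (hpos i).
  have hpb : forall i, 0 <= b i by move=> i; case: (hpos i).
  have hn0 : 0 <= tsum N b by apply: sumr_ge0.
  have [i0 hi0] : exists i, a i != 0.
    case: (@hasP _ (fun i : int => a i != 0) (window N)) => [[i _ hi]|hn]; first by exists i.
    suff : tsum N a = 0 by lia.
    apply: big1_seq => i /andP[_ hi]; apply/eqP/negPn/negP => hai; apply: hn.
    by exists i.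
  have hi0w : `|i0| <= N%:Z.
    case: (lerP `|i0| N%:Z) => // hs; have := Ha i0 hs; move: hi0; lia.
  pose P k := a (k%:Z - N%:Z) != 0.
  have exP : exists k, P k.
    by exists (absz (i0 + N%:Z)); rewrite /P; have -> : (absz (i0 + N%:Z))%:Z - N%:Z = i0 by lia.
  case: (ex_minnP exP) => k hk hmin.
  set sigma := k%:Z - N%:Z.
  have hal : forall l, l < sigma -> a l = 0.
    move=> l hl; case: (lerP (- N%:Z) l) => hlN; last by apply: Ha; lia.
    have := hmin (absz (l + N%:Z)); rewrite /P.
    have -> : (absz (l + N%:Z))%:Z - N%:Z = l by lia.
    case: eqP => // _ /(_ isT); lia.
  have hasig : 0 < a sigma by have := hpa sigma; move: hk; rewrite /P -/sigma; lia.
  have hA0 : psum_lt N a sigma = 0 by apply: psum_lt0.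
  have hB0 : psum_le N b sigma = 0.
    apply/eqP; rewrite eq_le psum_le_ge0 // andbT; rewrite leNgt; apply/negP => hpos0.
    have hBn : psum_le N b sigma <= tsum N b.
      case: (lerP N%:Z sigma) => hs; first by rewrite (psum_le_big b) ?lexx.
      by rewrite -(psum_le_big b (lexx N%:Z)); apply: psum_le_mono => //; apply: ltW.
    have hR : inR (tsum N a) (tsum N b) 2 1 by split => //; lia.
    have [_ h] := h3 2%N 1%N hR (ltac:(lia)).
    move: h; rewrite /Sat /=.
    have hb1 : nth 0 (Sseq N b) 0 < sigma + 1 by rewrite keyS //; [rewrite -psum_le_S; lia | lia].
    have ha1 : ~~ (nth 0 (Sseq N a) 1 < sigma) by rewrite keyS ?hA0 //; lia.
    move: ha1 hb1; rewrite -leNgt ltzD1 => ha1 hb1 h; have := le_lt_trans ha1 h.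
    by rewrite ltNge hb1.
  exists sigma; split => //.
  + move=> i hi; have := term_le Hb hpb hi; have := hpb i; lia.
  + move=> l hl; set kb := psum_le N b l.
    have hkb : 0 <= kb by apply: psum_le_ge0.
    have hA : a sigma <= psum_lt N a l.
      have -> : l = (l - 1) + 1 by lia.
      rewrite -psum_le_S; apply: term_le => //; lia.
    have hBn : kb <= tsum N b.
      case: (lerP N%:Z l) => hs; first by rewrite /kb (psum_le_big b) ?lexx.
      by rewrite /kb -(psum_le_big b (lexx N%:Z)); apply: psum_le_mono => //; apply: ltW.
    case: (ltrP 0 kb) => hk0; last by lia.
    set kn := absz kb.
    have hkn : kn%:Z = kb by rewrite /kn; lia.
    have hR : inR (tsum N a) (tsum N b) kn.+1 kn by split; lia.
    have hab : (kn.+1)%:Z - 1 <= kn%:Z by lia.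
    have [_ h] := h3 kn.+1 kn hR hab.
    move: h; rewrite /Sat /=.
    have hb1 : nth 0 (Sseq N b) kn.-1 < l + 1 by rewrite keyS //; [rewrite -psum_le_S; lia | lia].
    move: hb1; rewrite ltzD1 => hb1 h; have := lt_le_trans h hb1.
    rewrite keyS //; lia.
Qed.
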